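(* Let $P$ be a positive causal logic program and let $P'$ be its unlabelled version (every rule label replaced by $1$, i.e. the corresponding standard positive logic program). Let $I$ be the least causal model of $P$ and $I'$ the least classical model of $P'$ (viewed as a map from atoms to $\{0,1\}$). Then $I'=I^{cl}$.
   Context: Causal values are down-sets of causal graphs (reflexively–transitively closed directed graphs on labels, ordered by reverse inclusion), with $0=\emptyset$ and $1$ the set of all causal graphs; $*$ is intersection, $+$ union, and $U\cdot U'={\downarrow}\{G\cdot G'\mid G\in U,G'\in U'\}$ where $G\cdot G'$ is the closure of the graph with vertices $V\cup V'$ and edges $E\cup E'\cup(V\times V')$; a label $l$ denotes ${\downarrow}$ of the graph with only edge $(l,l)$. Rules are $t:H\leftarrow B_1,\dots,B_n$ with $t$ a label or $1$; a causal interpretation $I$ (atoms to causal values) is a model of positive $P$ iff $(I(B_1)*\dots*I(B_n))\cdot t\subseteq I(H)$ for each rule; the least model is taken w.r.t. pointwise inclusion. For a causal interpretation $I$, $I^{cl}(p)=0$ if $I(p)=0$ and $I^{cl}(p)=1$ otherwise. *)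

(* Defs.v *)
From Stdlib Require Import List Relations Classical ClassicalEpsilon.
Import ListNotations.
Set Implicit Arguments.

Section Causal.
Variables (Lb At : Type).

Record cgraph := CGraph {
  cv : Lb -> Prop;
  ce : Lb -> Lb -> Prop;
  ce_dom : forall x y, ce x y -> cv x /\ cv y;
  ce_refl : forall x, cv x -> ce x x;
  ce_trans : forall x y z, ce x y -> ce y z -> ce x z
}.

Definition subgraph (G G' : cgraph) : Prop :=
  (forall x, cv G x -> cv G' x) /\ (forall x y, ce G x y -> ce G' x y).

Definition gle (G G' : cgraph) : Prop := subgraph G' G.

Definition gset := cgraph -> Prop.
Definition is_downset (U : gset) : Prop :=
  forall G H, U G -> gle H G -> U H.
Definition downclose (S : gset) : gset := fun H => exists G, S G /\ gle H G.

Definition cv0 : gset := fun _ => False.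
Definition cv1 : gset := fun _ => True.
Definition cvmul (U U' : gset) : gset := fun G => U G /\ U' G.
Definition cvadd (U U' : gset) : gset := fun G => U G \/ U' G.
Definition gsubset (U U' : gset) : Prop := forall G, U G -> U' G.

Definition gprod_base (G G' : cgraph) (x y : Lb) : Prop :=
  ce G x y \/ ce G' x y \/ (cv G x /\ cv G' y).

Definition gprod_v (G G' : cgraph) (x : Lb) : Prop := cv G x \/ cv G' x.

Lemma gprod_base_dom G G' x y :
  gprod_base G G' x y -> gprod_v G G' x /\ gprod_v G G' y.
Proof.
  unfold gprod_base, gprod_v; intros [H|[H|[H1 H2]]].
  - destruct (ce_dom _ _ _ H); tauto.
  - destruct (ce_dom _ _ _ H); tauto.
  - tauto.
Qed.

Lemma gprod_dom G G' x y :
  clos_trans _ (gprod_base G G') x y -> gprod_v G G' x /\ gprod_v G G' y.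
Proof.
  induction 1 as [x y H|x y z _ [H1 _] _ [_ H2]].
  - now apply gprod_base_dom.
  - tauto.
Qed.

Lemma gprod_refl G G' x : gprod_v G G' x -> clos_trans _ (gprod_base G G') x x.
Proof.
  intros [H|H]; apply t_step; unfold gprod_base.
  - left; now apply ce_refl.
  - right; left; now apply ce_refl.
Qed.

Lemma gprod_trans G G' x y z :
  clos_trans _ (gprod_base G G') x y -> clos_trans _ (gprod_base G G') y z ->
  clos_trans _ (gprod_base G G') x z.
Proof. intros; eapply t_trans; eauto. Qed.

Definition gprod (G G' : cgraph) : cgraph :=
  @CGraph (gprod_v G G') (clos_trans _ (gprod_base G G'))
    (@gprod_dom G G') (@gprod_refl G G') (@gprod_trans G G').

Definition cvapp (U U' : gset) : gset :=
  downclose (fun H => exists G G', U G /\ U' G' /\ H = gprod G G').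

Definition lgraph_v (l : Lb) (x : Lb) : Prop := x = l.
Definition lgraph_e (l : Lb) (x y : Lb) : Prop := x = l /\ y = l.
Lemma lgraph_dom l x y : lgraph_e l x y -> lgraph_v l x /\ lgraph_v l y.
Proof. unfold lgraph_e, lgraph_v; tauto. Qed.
Lemma lgraph_refl l x : lgraph_v l x -> lgraph_e l x x.
Proof. unfold lgraph_e, lgraph_v; tauto. Qed.
Lemma lgraph_trans l x y z : lgraph_e l x y -> lgraph_e l y z -> lgraph_e l x z.
Proof. unfold lgraph_e; tauto. Qed.
Definition lgraph (l : Lb) : cgraph :=
  @CGraph (lgraph_v l) (lgraph_e l) (@lgraph_dom l) (@lgraph_refl l) (@lgraph_trans l).

Definition cvlabel (l : Lb) : gset := downclose (fun G => G = lgraph l).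

(** Rules  t : H <- B_1,...,B_n  with t a label (Some l) or 1 (None). *)
Record rule := Rule { rlab : option Lb; rhead : At; rbody : list At }.

Definition program := rule -> Prop.

Definition lab_value (t : option Lb) : gset :=
  match t with Some l => cvlabel l | None => cv1 end.

Definition cinterp := At -> gset.
Definition is_cinterp (I : cinterp) : Prop := forall a, is_downset (I a).

Definition body_value (I : cinterp) (B : list At) : gset :=
  fold_right cvmul cv1 (map I B).

Definition causal_model (P : program) (I : cinterp) : Prop :=
  is_cinterp I /\
  forall r, P r ->
    gsubset (cvapp (body_value I (rbody r)) (lab_value (rlab r))) (I (rhead r)).

Definition least_causal_model (P : program) (I : cinterp) : Prop :=
  causal_model P I /\
  forall J, causal_model P J -> forall a, gsubset (I a) (J a).

Definition unlabel (r : rule) : rule := Rule None (rhead r) (rbody r).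
Definition unlabelled (P : program) : program :=
  fun r => exists r0, P r0 /\ r = unlabel r0.

Definition classical_model (P : program) (M : At -> bool) : Prop :=
  forall r, P r -> (forall b, In b (rbody r) -> M b = true) -> M (rhead r) = true.

Definition least_classical_model (P : program) (M : At -> bool) : Prop :=
  classical_model P M /\
  forall M', classical_model P M' -> forall a, M a = true -> M' a = true.

Definition cl_interp (I : cinterp) (a : At) : bool :=
  if excluded_middle_informative (exists G, I a G) then true else false.

End Causal.

(* Main.v *)
Require Import Defs.
From Stdlib Require Import List Relations Classical ClassicalEpsilon FunctionalExtensionality.
Import ListNotations.

Definition fullg (Lb : Type) : cgraph Lb :=
  @CGraph Lb (fun _ => True) (fun _ _ => True)
    (fun _ _ _ => conj I I) (fun _ _ => I) (fun _ _ _ _ _ => I).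

Lemma full_below (Lb : Type) (G : cgraph Lb) : gle (fullg Lb) G.
Proof. unfold gle, subgraph; simpl; split; auto. Qed.

Lemma body_full (Lb At : Type) (J : cinterp Lb At) (G : cgraph Lb) B :
  (forall b, In b B -> J b G) -> body_value J B G.
Proof.
  induction B as [|b B IH]; intros H; simpl; unfold cvmul, cv1; [exact I|].
  split; [apply H; simpl; auto | apply IH; intros; apply H; simpl; auto].
Qed.

Lemma body_in (Lb At : Type) (J : cinterp Lb At) (G : cgraph Lb) B :
  body_value J B G -> forall b, In b B -> J b G.
Proof.
  induction B as [|b B IH]; simpl; [tauto|].
  unfold cvmul; intros [H1 H2] c [<-|Hc]; auto.
Qed.

Theorem theorem5 (Lb At : Type) (P : program Lb At)
  (I : cinterp Lb At) (I' : At -> bool) :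
  least_causal_model P I ->
  least_classical_model (unlabelled P) I' ->
  I' = cl_interp I.
Proof.
  intros [[HdI HI] HminI] [HI' HminI'].
  assert (D1 : forall a, I' a = true -> cl_interp I a = true).
  { apply HminI'. intros r [r0 [Hr0 ->]] Hb. simpl in *.
    unfold cl_interp. destruct excluded_middle_informative as [_|Hn]; [reflexivity|].
    exfalso; apply Hn. exists (gprod (fullg Lb) (fullg Lb)).
    apply (HI r0 Hr0). exists (gprod (fullg Lb) (fullg Lb)). split; [|split; auto].
    exists (fullg Lb), (fullg Lb). split; [|split; [|reflexivity]].
    - apply body_full. intros b Hin. specialize (Hb b Hin).
      unfold cl_interp in Hb. destruct excluded_middle_informative as [[G HG]|]; [|discriminate].
      exact (HdI b G (fullg Lb) HG (@full_below Lb G)).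
    - destruct (rlab r0) as [l|]; simpl; [|exact Logic.I].
      exists (lgraph l). split; [reflexivity| apply full_below]. }
  assert (D2 : forall a, cl_interp I a = true -> I' a = true).
  { set (J := fun (a : At) (G : cgraph Lb) => I' a = true).
    assert (HJ : causal_model P J).
    { split.
      - intros a G H HG _; exact HG.
      - intros r Hr G [G0 [[G1 [G2 [HB _]]] _]].
        unfold J. apply (HI' (unlabel r)); [exists r; auto|].
        simpl. intros b Hb. exact (@body_in Lb At J G1 (rbody r) HB b Hb). }
    intros a Ha. unfold cl_interp in Ha.
    destruct excluded_middle_informative as [[G HG]|]; [|discriminate].
    exact (HminI J HJ a G HG). }
  apply functional_extensionality; intros a.
  destruct (I' a) eqn:E.
  - symmetry; apply D1; exact E.
  - destruct (cl_interp I a) eqn:E2; auto. rewrite (D2 a E2) in E; discriminate.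
Qed.
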